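(* Let $H$ be an undirected graph with $n$ vertices and let $G_{\mathrm{sub}}$ be a graph obtained from $H$ by subdividing each edge at most once. Then $\mathrm{dtw}(G_{\mathrm{sub}})\le\lceil n/2\rceil$, i.e., every acyclic orientation of $G_{\mathrm{sub}}$ has DAG treewidth at most $\lceil n/2\rceil$.
   Context: Subdividing an edge $\{u,v\}$ replaces it by a new vertex $w$ and edges $\{u,w\},\{w,v\}$. For a DAG $\vec H$, a source is a vertex of in-degree $0$; $S$ denotes the set of sources; $R(s)$ is the set of vertices reachable from $s$, and $R(B)=\bigcup_{s\in B}R(s)$. A DAG tree decomposition of $\vec H$ is a tree $T$ whose nodes (bags) are subsets of $S$ such that every source lies in some bag and, for any bags $B,B_1,B_2$ with $B$ on the path between $B_1$ and $B_2$ in $T$, $R(B_1)\cap R(B_2)\subseteq R(B)$; its width is the maximum bag size and $\mathrm{dtw}(\vec H)$ is the minimum width. For an undirected graph, $\mathrm{dtw}$ is the maximum of $\mathrm{dtw}(\vec H)$ over all its acyclic orientations $\vec H$. *)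

(* Defs.v *)
From mathcomp Require Import all_boot.
Set Implicit Arguments. Unset Strict Implicit. Unset Printing Implicit Defensive.

Section DAG.
Variable W : finType.
Variable a : rel W.  (* arc relation of a digraph: a x y means x -> y *)

Definition acyclic_digraph : Prop := forall x y, a x y -> ~~ connect a y x.

Definition sources : {set W} := [set x | [forall y, ~~ a y x]].

Definition reach (s : W) : {set W} := [set y | connect a s y].

Definition reachB (B : {set W}) : {set W} := \bigcup_(s in B) reach s.
End DAG.

Section Tree.
Variable I : finType.
Variable t : rel I.

Definition upath (j : I) (p : seq I) (k : I) : bool :=
  [&& path t j p, uniq (j :: p) & last j p == k].

Definition is_tree : Prop :=
  [/\ 0 < #|I|, symmetric t, irreflexive t,
      (forall j k, exists p, upath j p k) &
      (forall j k p q, upath j p k -> upath j q k -> p = q)].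

Definition on_path (i j k : I) : Prop :=
  forall p, upath j p k -> i \in j :: p.
End Tree.

Definition is_dag_td (W : finType) (a : rel W) (I : finType) (t : rel I)
  (B : I -> {set W}) : Prop :=
  [/\ is_tree t,
      (forall i, B i \subset sources a),
      (forall s, s \in sources a -> exists i, s \in B i) &
      (forall i j k, on_path t i j k ->
         reachB a (B j) :&: reachB a (B k) \subset reachB a (B i))].

Definition td_width (W : finType) (I : finType) (B : I -> {set W}) : nat :=
  \max_(i : I) #|B i|.

Definition dtw_le (W : finType) (a : rel W) (k : nat) : Prop :=
  exists (I : finType) (t : rel I) (B : I -> {set W}),
    is_dag_td a t B /\ td_width B <= k.

Definition is_orientation (W : finType) (g a : rel W) : Prop :=
  forall x y, (a x y -> g x y) /\ (g x y -> a x y != a y x).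

Definition dtw_undir_le (W : finType) (g : rel W) (k : nat) : Prop :=
  forall a : rel W, is_orientation g a -> acyclic_digraph a -> dtw_le a k.

(* H = (V, e) simple graph; F = set of edges of H (as 2-sets) that get
   subdivided once. The new vertex for s \in F is inr s. *)
Definition sub_vert (V : finType) (F : {set {set V}}) : finType :=
  (V + {s : {set V} | s \in F})%type.

Definition sub_adj (V : finType) (e : rel V) (F : {set {set V}})
  : rel (sub_vert F) :=
  fun x y => match x, y with
  | inl u, inl v => e u v && ([set u; v] \notin F)
  | inl u, inr s => u \in val s
  | inr s, inl v => v \in val s
  | inr _, inr _ => false
  end.
Arguments sub_adj {V} e F.

(* Main.v *)
Require Import Defs.
From mathcomp Require Import all_boot.
From mathcomp Require Import zify.
Set Implicit Arguments. Unset Strict Implicit. Unset Printing Implicit Defensive.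

Section DStar.
Variable W : finType.
Variable side : W -> bool.
Definition dnode : finType := (bool + W)%type.

Definition dt : rel dnode := fun x y =>
  match x, y with
  | inl b, inl b' => b != b'
  | inl b, inr s => side s == b
  | inr s, inl b => side s == b
  | inr _, inr _ => false
  end.

Definition canon (j k : dnode) : seq dnode :=
  if j == k then [::] else
  match j, k with
  | inl b, inl b' => [:: k]
  | inl b, inr s => if side s == b then [:: k] else [:: inl (~~ b); k]
  | inr s, inl b => if side s == b then [:: k] else [:: inl (side s); k]
  | inr s, inr s' => if side s == side s' then [:: inl (side s); k]
                     else [:: inl (side s); inl (side s'); k]
  end.

Ltac rwE := repeat match goal with E : side ?s = _ |- context[side ?s] => rewrite E end.
Ltac brute := repeat (rewrite /dt /= ?inE ?eqxx ?andbF ?andbT /=; rwE; rewrite /= ?inE ?eqxx ?andbF ?andbT /=;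
  match goal with |- context[side ?s] => let E := fresh "E" in case E: (side s) end);
  rewrite /dt /= ?inE ?eqxx ?andbF ?andbT /=; rwE; rewrite /= ?inE ?eqxx ?andbF ?andbT /=; try done.

Lemma canon_upath j k : upath dt j (canon j k) k.
Proof.
rewrite /upath /canon; case: eqP => [->|/eqP]; first by rewrite /= !eqxx.
case: j k => [b|s] [b'|s'] /=; rewrite ?inE; move=> ne.
all: rewrite ?inE ?eqxx ?ne /=.
all: try (have nss : s != s' by apply: contra ne => /eqP ->).
all: move: ne; rewrite ?inE ?eqxx //=.
all: try (case: b); try (case: b'); brute; rewrite ?nss //.
Qed.

Lemma upath_canon j p k : upath dt j p k -> p = canon j k.
Proof.
case: p => [|y1 p]; first by case/and3P=> _ _ /eqP /= <-; rewrite /canon eqxx.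
move=> up; have jk : j != k.
  case/and3P: up => _ /andP[nj _] /eqP lk; apply: contra nj => /eqP ->.
  by rewrite -lk /= mem_last.
rewrite /canon (negbTE jk); move: up jk; rewrite /upath.
case: p => [|y2 [|y3 [|y4 q]]] /=.
- move=> /and3P[H1 H2 /eqP <-] _; move: H1 H2.
  case: j y1 => [b|s] [b1|s1]; try case: b; try case: b1; brute.
- move=> /and3P[H1 H2 /eqP <-] _; move: H1 H2.
  case: j y1 y2 => [b|s] [b1|s1] [b2|s2]; try case: b; try case: b1; try case: b2; brute.
- move=> /and3P[H1 H2 /eqP <-] _; move: H1 H2.
  case: j y1 y2 y3 => [b|s] [b1|s1] [b2|s2] [b3|s3]; try case: b; try case: b1; try case: b2; try case: b3; brute.
- move=> /and3P[H1 H2 _] _; move: H1 H2.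
  case: j y1 y2 y3 y4 => [b|s] [b1|s1] [b2|s2] [b3|s3] [b4|s4]; try case: b; try case: b1; try case: b2; try case: b3; try case: b4; brute.
Qed.

Lemma dt_tree : is_tree dt.
Proof.
split.
- by apply/card_gt0P; exists (inl true).
- by case=> [b|s] [b'|s'] //=; rewrite eq_sym.
- by case=> [b|s] //=; rewrite eqxx.
- by move=> j k; exists (canon j k); apply: canon_upath.
- by move=> j k p q /upath_canon -> /upath_canon ->.
Qed.

Lemma dt_interior i j k : on_path dt i j k ->
  i = j \/ i = k \/ (j != k /\ exists s, (j = inr s \/ k = inr s) /\ i = inl (side s)).
Proof.
move=> /(_ _ (canon_upath j k)); rewrite /canon; case: eqP => [-> | /eqP ne].
  by rewrite inE => /eqP; left.
case: j k ne => [b|s] [b'|s'] ne; rewrite ?inE.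
- by case/orP=> /eqP ->; [left|right; left].
- case: ifP => [_|/negbT h]; rewrite !inE.
    by case/orP=> /eqP ->; [left|right; left].
  case/or3P=> /eqP ->; [left|right; right|right; left] => //.
  split=> //; exists s'; split; first by right.
  by congr inl; move: h {ne}; case: (side s'); case: b.
- case: ifP => [_|/negbT h]; rewrite !inE.
    by case/orP=> /eqP ->; [left|right; left].
  case/or3P=> /eqP ->; [left|right; right|right; left] => //.
  by split=> //; exists s; split; first by left.
- case: ifP => [_|/negbT h]; rewrite !inE.
    case/or3P=> /eqP ->; [left|right; right|right; left] => //.
    by split=> //; exists s; split; first by left.
  case/or4P=> /eqP ->; [left|right; right|right; right|right; left] => //.
    by split=> //; exists s; split; first by left.
  by split=> //; exists s'; split; first by right.
Qed.
End DStar.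

Section DAGPart.
Variable W : finType.
Variable a : rel W.
Variable Vs : {set W}.
Hypothesis HV : forall y x, a y x -> x \notin Vs -> y \in Vs.
Hypothesis Hne : forall x : W, 0 < #|Vs|.

Lemma reachBP (B : {set W}) x : reflect (exists2 s, s \in B & connect a s x) (x \in reachB a B).
Proof.
rewrite /reachB; apply: (iffP bigcupP) => [[s sB]|[s sB]]; rewrite ?inE => h;
  by exists s; rewrite ?inE.
Qed.

Lemma src_reach s t : s \in sources a -> connect a t s -> t = s.
Proof.
rewrite inE => /forallP hs /connectP[p pth ls].
move: pth ls; elim/last_ind: p => [//|p y _].
rewrite rcons_path last_rcons => /andP[_ ay] ys.
by move: (hs (last t p)); rewrite ys ay.
Qed.

Lemma pred_reach s x : connect a s x -> s != x -> exists2 y, connect a s y & a y x.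
Proof.
move=> /connectP[p pth ls]; move: pth ls; elim/last_ind: p => [/= _ -> |p y _].
  by rewrite eqxx.
rewrite rcons_path last_rcons => /andP[pp ay] -> _.
by exists (last s p) => //; apply/connectP; exists p.
Qed.

Definition good (Z : {set W}) :=
  (Z \subset sources a) && (2 * #|Z| <= #|Vs :&: reachB a Z|).

Lemma good0 : good set0.
Proof. by rewrite /good sub0set cards0. Qed.

Definition Zm := [arg max_(Z > set0 | good Z) #|Z|].

Lemma Zm_good : good Zm.
Proof. by rewrite /Zm; case: arg_maxnP => //; exact: good0. Qed.

Lemma Zm_max Z : good Z -> #|Z| <= #|Zm|.
Proof. by rewrite /Zm; case: arg_maxnP => [|Z0 _ h]; [exact: good0|exact: h]. Qed.

Lemma Zm_src : Zm \subset sources a.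
Proof. by case/andP: Zm_good. Qed.

Lemma uniqZ s w1 w2 : s \in sources a -> s \notin Zm -> w1 \in Vs -> w2 \in Vs ->
  connect a s w1 -> connect a s w2 ->
  w1 \notin reachB a Zm -> w2 \notin reachB a Zm -> w1 = w2.
Proof.
move=> hs nZ v1 v2 c1 c2 n1 n2; apply/eqP; apply/negPn/negP => ne.
have: good (s |: Zm).
  case/andP: Zm_good => sub le; apply/andP; split.
    by rewrite subUset sub1set hs sub.
  rewrite cardsU1 nZ.
  have sub2 : (Vs :&: reachB a Zm) :|: [set w1; w2] \subset Vs :&: reachB a (s |: Zm).
    apply/subsetP => x; rewrite !inE => /orP[/andP[xV /reachBP[z zZ cz]]|/orP[]/eqP->].
    - by rewrite xV; apply/reachBP; exists z; rewrite // !inE zZ orbT.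
    - by rewrite v1; apply/reachBP; exists s; rewrite // !inE eqxx.
    - by rewrite v2; apply/reachBP; exists s; rewrite // !inE eqxx.
  apply: leq_trans (subset_leq_card sub2).
  rewrite cardsU cards2 ne.
  have -> : (Vs :&: reachB a Zm) :&: [set w1; w2] = set0.
    apply/setP => x; rewrite !inE; apply/negP => /andP[/andP[_ xR] /orP[]/eqP xw].
      by move: n1; rewrite -xw xR.
    by move: n2; rewrite -xw xR.
  rewrite cards0 subn0 /= add1n; lia.
by move/Zm_max; rewrite cardsU1 nZ ltnn.
Qed.


Definition RZ := reachB a Zm.
Definition Vp := Vs :\: RZ.
Definition V1 : {set W} := [set x in take (#|Vp|./2) (enum Vp)].
Definition V2 := Vp :\: V1.
Definition rep (w : W) : option W := [pick s in sources a | connect a s w].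
Definition repset (A : {set W}) : {set W} :=
  [set s | [exists w in A, rep w == Some s]].
Definition side (s : W) : bool := [exists w in V1, connect a s w].
Definition X (b : bool) : {set W} := Zm :|: repset (if b then V1 else V2).
Definition L := sources a :\: (X true :|: X false).
Definition Bg (i : dnode W) : {set W} :=
  match i with inl b => X b | inr s => if s \in L then [set s] else set0 end.

Lemma V1_sub : V1 \subset Vp.
Proof. by apply/subsetP => x; rewrite inE => /mem_take; rewrite mem_enum. Qed.

Lemma card_V1 : #|V1| = #|Vp|./2.
Proof.
rewrite /V1 cardsE; move/card_uniqP: (take_uniq (#|Vp|./2) (enum_uniq (mem Vp))) => ->.
by rewrite size_takel // -cardE -{2}(odd_double_half #|Vp|) -addnn; lia.
Qed.

Lemma card_V2 : #|V2| = #|Vp| - #|Vp|./2.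
Proof. by rewrite /V2 cardsDS ?V1_sub // card_V1. Qed.

Lemma repP (A : {set W}) w s : w \in A -> connect a s w -> s \in sources a ->
  exists2 r, r \in repset A & connect a r w.
Proof.
move=> wA cs hs; case E: (rep w) => [r|].
  have := E; rewrite /rep; case: pickP => // r' /andP[_ cr] [er]; subst r'.
  by exists r => //; rewrite inE; apply/existsP; exists w; rewrite wA E eqxx.
by move: E; rewrite /rep; case: pickP => // /(_ s); rewrite hs cs.
Qed.

Lemma repset_src A : repset A \subset sources a.
Proof.
apply/subsetP => s; rewrite inE => /existsP[w /andP[_ /eqP]].
by rewrite /rep; case: pickP => // r /andP[hr _] [<-].
Qed.

Lemma card_repset A : #|repset A| <= #|A|.
Proof.
apply: leq_trans (leq_imset_card (fun w => odflt w (rep w)) A).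
apply: subset_leq_card; apply/subsetP => s; rewrite inE => /existsP[w /andP[wA /eqP E]].
by apply/imsetP; exists w; rewrite // E.
Qed.

Lemma keyA s w : s \in sources a -> s \notin Zm -> w \in Vs -> connect a s w ->
  exists2 r, r \in X (side s) & connect a r w.
Proof.
move=> hs nZ wV cs; case: (boolP (w \in RZ)) => [/reachBP[z zZ cz]|nR].
  by exists z; rewrite // inE zZ.
have wVp : w \in Vp by rewrite inE nR.
case: (boolP (w \in V1)) => w1.
  have -> : side s = true by apply/existsP; exists w; rewrite w1.
  by have [r rA cr] := repP w1 cs hs; exists r; rewrite // inE rA orbT.
have w2 : w \in V2 by rewrite inE w1.
have -> : side s = false.
  apply/negbTE/negP => /existsP[w' /andP[w'1 cw']].
  have w'p : w' \in Vp := subsetP V1_sub _ w'1.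
  move: w'p; rewrite inE => /andP[nR' w'V].
  by have E := uniqZ hs nZ w'V wV cw' cs nR' nR; move: w1; rewrite -E w'1.
by have [r rA cr] := repP w2 cs hs; exists r; rewrite // inE rA orbT.
Qed.

Lemma keyB s x : s \in sources a -> s \notin Zm -> connect a s x -> x != s ->
  x \in reachB a (X (side s)).
Proof.
move=> hs nZ cs xs; case: (boolP (x \in Vs)) => xV.
  by have [r rX cr] := keyA hs nZ xV cs; apply/reachBP; exists r.
have [y cy ayx] := pred_reach cs (ltac:(by rewrite eq_sym)).
have yV := HV ayx xV.
have [r rX cr] := keyA hs nZ yV cy; apply/reachBP; exists r => //.
by apply: connect_trans cr (connect1 ayx).
Qed.

Lemma X_src b : X b \subset sources a.
Proof. by rewrite subUset Zm_src repset_src. Qed.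

Lemma leaf_cond s k x : k != inr s -> x \in reachB a (Bg (inr s)) ->
  x \in reachB a (Bg k) -> x \in reachB a (X (side s)).
Proof.
move=> ks /reachBP[t]; rewrite /Bg /=; case: ifP => [sL|_]; last by rewrite in_set0.
rewrite inE => /eqP -> cs /reachBP[t' t'k ct'].
move: (sL); rewrite in_setD in_setU negb_or => /andP[/andP[nX1 nX2] hs].
have nZ : s \notin Zm by apply: contra nX1 => h; rewrite /X in_setU h.
apply: keyB => //; apply/eqP => xs; subst x.
have ets := src_reach hs ct'; subst t'.
move: t'k ks; case: k => [[]|s''] /=; rewrite ?(negbTE nX1) ?(negbTE nX2) //.
by case: ifP => _; rewrite inE // => /eqP ->; rewrite eqxx.
Qed.

Lemma dag_td : is_dag_td a (dt side) Bg.
Proof.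
split.
- exact: dt_tree.
- case=> [b|s] /=; first exact: X_src.
  case: ifP => sL; last exact: sub0set.
  by rewrite sub1set; move: sL; rewrite inE => /andP[].
- move=> s hs; case: (boolP (s \in X true)) => h1; first by exists (inl true).
  case: (boolP (s \in X false)) => h2; first by exists (inl false).
  have sL : s \in L by rewrite in_setD in_setU negb_or h1 h2 hs.
  by exists (inr s); rewrite /= sL set11.
- move=> i j k /dt_interior [->|[->|[jk [s [hjs ->]]]]].
  + exact: subsetIl.
  + exact: subsetIr.
  + apply/subsetP => x /setIP[xj xk]; rewrite /=.
    case: hjs => E; subst.
    * by apply: leaf_cond xj xk; rewrite eq_sym.
    * by apply: leaf_cond xk xj.
Qed.

Lemma width_ok : td_width Bg <= uphalf #|Vs|.
Proof.
have good := Zm_good; move/andP: good => [_ le].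
have ID := cardsID RZ Vs; rewrite -/Vp in ID.
have hV1 := card_V1; have hV2 := card_V2.
have OD := odd_double_half #|Vp|; have OD2 := odd_double_half #|Vs|.
have U := uphalf_half #|Vs|.
apply/bigmax_leqP => -[b|s] _ /=.
- apply: leq_trans (leq_card_setU _ _) _.
  have R := card_repset (if b then V1 else V2).
  have HH : #|Zm| + (#|Vp| - #|Vp|./2) <= uphalf #|Vs|.
    rewrite U; move: OD OD2; rewrite /RZ in ID.
    case: (odd #|Vp|); case: (odd #|Vs|); rewrite /= -!muln2; lia.
  by case: b R => R; apply: leq_trans HH; rewrite leq_add2l; apply: leq_trans R _;
     rewrite ?hV1 ?hV2 //; lia.
- case: ifP => _; last by rewrite cards0.
  rewrite cards1 U; have := Hne s; move: OD2.
  case: (odd #|Vs|); rewrite /= -!muln2; lia.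
Qed.

Lemma dtw_main : dtw_le a (uphalf #|Vs|).
Proof. by exists (dnode W), (dt side), Bg; split; [exact: dag_td|exact: width_ok]. Qed.

End DAGPart.

Theorem mainTheorem15 (V : finType) (e : rel V) (F : {set {set V}}) :
  symmetric e -> irreflexive e ->
  (forall s, s \in F -> exists u v, e u v /\ s = [set u; v]) ->
  dtw_undir_le (sub_adj e F) (uphalf #|V|).
Proof.
move=> esym eirr hF a Hor Hac.
pose Vs : {set sub_vert F} := (@inl V {s : {set V} | s \in F}) @: [set: V].
have inj : injective (@inl V {s : {set V} | s \in F}) by move=> x y [].
have cardV : #|Vs| = #|V| by rewrite card_imset // cardsT.
rewrite -cardV; apply: dtw_main.
- move=> y x /((Hor y x).1) g; case: x g => [v|e'] g.
    by rewrite (imset_f _ (in_setT v)).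
  by case: y g => [u|e''] g //= _; exact: (imset_f _ (in_setT u)).
- case=> [v|[e' he']]; apply/card_gt0P.
    by exists (inl v); exact: (imset_f _ (in_setT v)).
  have [u [v [_ _]]] := hF e' he'.
  by exists (inl u); exact: (imset_f _ (in_setT u)).
Qed.
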